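(* Let $(n_j)_{j\in\mathbb N}$ be a strictly increasing sequence of positive integers and $\omega\in\Sigma$. If $\lim_{j\to\infty}A_{n_j}g(\omega)=0$ and $\lim_{j\to\infty}A_{n_j}f(\omega)$ exists, then $\lim_{j\to\infty}A_{n_j}f(\omega)\in A$. In particular, if $\lim_{n\to\infty}A_ng(\omega)=0$ and $\lim_{n\to\infty}A_nf(\omega)$ exists, then $\lim_{n\to\infty}A_nf(\omega)\in A$.
   Context: Let $T_1,\dots,T_m:[0,1]\to[0,1]$ be $C^1$ maps with $T_i'>0$, $T_i((0,1))\cap T_j((0,1))=\emptyset$ for $i\ne j$, and $\operatorname{diam}(T_{i_1}\circ\cdots\circ T_{i_n}([0,1]))\to0$ uniformly. $\Sigma=\{1,\dots,m\}^{\mathbb N}$ with shift $\sigma$, $\Pi(\omega)=\lim_nT_{\omega_1}\circ\cdots\circ T_{\omega_n}(0)$. Each $T_i$ fixes $x_i=\Pi(i,i,i,\dots)$, with $T_i'(x_i)\le1$ and $0<T_i'(x)<1$ for $x\ne x_i$; $\mathcal I=\{i:T_i'(x_i)=1\}$ is nonempty. $g(\omega)=-\log T'_{\omega_1}(\Pi(\sigma\omega))$, $f:\Sigma\to\mathbb R$ continuous, $A_nF=\frac1n\sum_{i=0}^{n-1}F\circ\sigma^i$, and $A=[\min_{i\in\mathcal I}f(i,i,\dots),\max_{i\in\mathcal I}f(i,i,\dots)]$. *)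

(* Defs.v *)
From Stdlib Require Import Reals Lra Lia.
Open Scope R_scope.

(* Symbols: the alphabet {1,...,m} is encoded as {0,...,m-1} (nat below m);
   a point of Sigma is a sequence omega : nat -> nat with omega k < m for all k
   (omega 0 is the first letter omega_1 of the paper). *)
Definition in_Sigma (m : nat) (w : nat -> nat) : Prop := forall k, (w k < m)%nat.

Definition shift (w : nat -> nat) : nat -> nat := fun k => w (S k).
Definition shiftn (k : nat) (w : nat -> nat) : nat -> nat := fun j => w (j + k)%nat.

Definition constseq (i : nat) : nat -> nat := fun _ => i.

Fixpoint ifs_comp (T : nat -> R -> R) (w : nat -> nat) (n : nat) (x : R) : R :=
  match n with
  | O => x
  | S n' => T (w O) (ifs_comp T (shift w) n' x)
  end.

Definition deriv_on01 (h hd : R -> R) : Prop :=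
  forall x, 0 <= x <= 1 -> forall eps, 0 < eps -> exists delta, 0 < delta /\
    forall y, 0 <= y <= 1 -> y <> x -> Rabs (y - x) < delta ->
      Rabs ((h y - h x) / (y - x) - hd x) < eps.

Definition cont_on01 (h : R -> R) : Prop :=
  forall x, 0 <= x <= 1 -> forall eps, 0 < eps -> exists delta, 0 < delta /\
    forall y, 0 <= y <= 1 -> Rabs (y - x) < delta -> Rabs (h y - h x) < eps.

Definition cont_Sigma (m : nat) (F : (nat -> nat) -> R) : Prop :=
  forall w, in_Sigma m w -> forall eps, 0 < eps -> exists N : nat,
    forall w', in_Sigma m w' -> (forall k, (k < N)%nat -> w' k = w k) ->
      Rabs (F w' - F w) < eps.

Fixpoint birk_sum (F : (nat -> nat) -> R) (w : nat -> nat) (n : nat) : R :=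
  match n with
  | O => 0
  | S n' => birk_sum F w n' + F (shiftn n' w)
  end.

Definition avg (n : nat) (F : (nat -> nat) -> R) (w : nat -> nat) : R :=
  / INR n * birk_sum F w n.

Definition gpot (Td : nat -> R -> R) (Pi : (nat -> nat) -> R) (w : nat -> nat) : R :=
  - ln (Td (w O) (Pi (shift w))).

Definition indI (m : nat) (Td : nat -> R -> R) (Pi : (nat -> nat) -> R) (i : nat) : Prop :=
  (i < m)%nat /\ Td i (Pi (constseq i)) = 1.

(* L \in A = [min_{i in I} f(i,i,...), max_{i in I} f(i,i,...)]
   (I is finite and nonempty, so this is min <= L <= max) *)
Definition inA (m : nat) (Td : nat -> R -> R) (Pi : (nat -> nat) -> R)
  (f : (nat -> nat) -> R) (L : R) : Prop :=
  (exists i, indI m Td Pi i /\ f (constseq i) <= L) /\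
  (exists j, indI m Td Pi j /\ L <= f (constseq j)).

(* Main.v *)
Require Import Defs.
From Stdlib Require Import Reals Lra Lia Classical ClassicalEpsilon.
Open Scope R_scope.

Lemma fin_R_up (P : nat -> Prop) (Q : nat -> R -> Prop) (m : nat) :
  (forall i B B', Q i B -> B <= B' -> Q i B') ->
  (forall i, (i < m)%nat -> P i -> exists B, Q i B) ->
  exists B, forall i, (i < m)%nat -> P i -> Q i B.
Proof.
  intros Hmon. induction m as [|m IH]; intros H.
  - exists 0. intros; lia.
  - destruct IH as [B1 HB1]. { intros i Hi; apply H; lia. }
    destruct (classic (P m)) as [Pm|nPm].
    + destruct (H m ltac:(lia) Pm) as [B2 HB2].
      exists (Rmax B1 B2). intros i Hi Pi.
      destruct (Nat.eq_dec i m) as [->|Hne].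
      * eapply Hmon; [exact HB2| apply Rmax_r].
      * eapply Hmon; [apply HB1; [lia|exact Pi] | apply Rmax_l].
    + exists B1. intros i Hi Pi. destruct (Nat.eq_dec i m) as [->|Hne]; [contradiction|].
      apply HB1; [lia|exact Pi].
Qed.

Lemma fin_R_down (P : nat -> Prop) (Q : nat -> R -> Prop) (m : nat) :
  (forall i B B', Q i B -> 0 < B' <= B -> Q i B') ->
  (forall i, (i < m)%nat -> P i -> exists B, 0 < B /\ Q i B) ->
  exists B, 0 < B /\ forall i, (i < m)%nat -> P i -> Q i B.
Proof.
  intros Hmon. induction m as [|m IH]; intros H.
  - exists 1. split; [lra|]. intros; lia.
  - destruct IH as [B1 [HB1p HB1]]. { intros i Hi; apply H; lia. }
    destruct (classic (P m)) as [Pm|nPm].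
    + destruct (H m ltac:(lia) Pm) as [B2 [HB2p HB2]].
      exists (Rmin B1 B2). assert (0 < Rmin B1 B2) by (apply Rmin_glb_lt; lra).
      split; [lra|]. intros i Hi Pi.
      destruct (Nat.eq_dec i m) as [->|Hne].
      * eapply Hmon; [exact HB2| split; [lra|apply Rmin_r]].
      * eapply Hmon; [apply HB1; [lia|exact Pi] | split; [lra|apply Rmin_l]].
    + exists B1. split; [lra|]. intros i Hi Pi. destruct (Nat.eq_dec i m) as [->|Hne]; [contradiction|].
      apply HB1; [lia|exact Pi].
Qed.

Lemma fin_nat_up (P : nat -> Prop) (Q : nat -> nat -> Prop) (m : nat) :
  (forall i B B', Q i B -> (B <= B')%nat -> Q i B') ->
  (forall i, (i < m)%nat -> P i -> exists B, Q i B) ->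
  exists B, forall i, (i < m)%nat -> P i -> Q i B.
Proof.
  intros Hmon. induction m as [|m IH]; intros H.
  - exists 0%nat. intros; lia.
  - destruct IH as [B1 HB1]. { intros i Hi; apply H; lia. }
    destruct (classic (P m)) as [Pm|nPm].
    + destruct (H m ltac:(lia) Pm) as [B2 HB2].
      exists (Nat.max B1 B2). intros i Hi Pi.
      destruct (Nat.eq_dec i m) as [->|Hne].
      * eapply Hmon; [exact HB2| lia].
      * eapply Hmon; [apply HB1; [lia|exact Pi] | lia].
    + exists B1. intros i Hi Pi. destruct (Nat.eq_dec i m) as [->|Hne]; [contradiction|].
      apply HB1; [lia|exact Pi].
Qed.

Definition clamp (x : R) : R := Rmax 0 (Rmin 1 x).

Lemma clamp_in x : 0 <= clamp x <= 1.
Proof. unfold clamp, Rmax, Rmin. repeat destruct Rle_dec; lra. Qed.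

Lemma clamp_id x : 0 <= x <= 1 -> clamp x = x.
Proof. intros. unfold clamp, Rmax, Rmin. repeat destruct Rle_dec; lra. Qed.

Lemma clamp_lip x y : Rabs (clamp y - clamp x) <= Rabs (y - x).
Proof.
  unfold clamp, Rmax, Rmin. repeat destruct Rle_dec;
  unfold Rabs; repeat destruct Rcase_abs; lra.
Qed.

Lemma ext_cont (h : R -> R) : cont_on01 h -> continuity (fun x => h (clamp x)).
Proof.
  intros Hc x. unfold continuity_pt, continue_in, limit1_in, limit_in.
  intros eps Heps. simpl. unfold R_dist.
  destruct (Hc (clamp x) (clamp_in x) eps Heps) as [d [Hd H]].
  exists d; split; [exact Hd|]. intros y [_ Hy].
  apply H; [apply clamp_in|]. eapply Rle_lt_trans; [apply clamp_lip|exact Hy].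
Qed.

Lemma EV_max (h : R -> R) a b : cont_on01 h -> 0 <= a -> a <= b -> b <= 1 ->
  exists y, a <= y <= b /\ forall z, a <= z <= b -> h z <= h y.
Proof.
  intros Hc Ha Hab Hb.
  destruct (continuity_ab_maj (fun x => h (clamp x)) a b Hab) as [y [H1 H2]].
  { intros c _. apply ext_cont; auto. }
  exists y; split; auto. intros z Hz. specialize (H1 z Hz).
  rewrite !clamp_id in H1 by lra. exact H1.
Qed.

Lemma EV_min (h : R -> R) a b : cont_on01 h -> 0 <= a -> a <= b -> b <= 1 ->
  exists y, a <= y <= b /\ forall z, a <= z <= b -> h y <= h z.
Proof.
  intros Hc Ha Hab Hb.
  destruct (continuity_ab_min (fun x => h (clamp x)) a b Hab) as [y [H1 H2]].
  { intros c _. apply ext_cont; auto. }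
  exists y; split; auto. intros z Hz. specialize (H1 z Hz).
  rewrite !clamp_id in H1 by lra. exact H1.
Qed.

Lemma IVT01 (h : R -> R) a b y : cont_on01 h -> 0 <= a -> a <= b -> b <= 1 ->
  h a <= y <= h b -> exists z, a <= z <= b /\ h z = y.
Proof.
  intros Hc Ha Hab Hb Hy.
  destruct (IVT_cor (fun x => h (clamp x) - y) a b) as [z [Hz Hz2]]; auto.
  { apply continuity_minus; [apply ext_cont; auto| apply continuity_const; intros ? ?; auto]. }
  { rewrite !clamp_id by lra. nra. }
  exists z; split; auto. rewrite clamp_id in Hz2 by lra. lra.
Qed.

Lemma deriv_cont (T Td : R -> R) : deriv_on01 T Td -> cont_on01 T.
Proof.
  intros Hd x Hx eps Heps.
  destruct (Hd x Hx 1 ltac:(lra)) as [d1 [Hd1 H1]].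
  set (K := Rabs (Td x) + 1).
  assert (HK : 0 < K) by (unfold K; pose proof (Rabs_pos (Td x)); lra).
  exists (Rmin d1 (eps / K)). split.
  { apply Rmin_glb_lt; auto. apply Rdiv_lt_0_compat; auto. }
  intros y Hy Hyx.
  destruct (Req_dec y x) as [->|Hne].
  { rewrite Rminus_diag, Rabs_R0; auto. }
  assert (Hy1 : Rabs (y - x) < d1) by (eapply Rlt_le_trans; [exact Hyx| apply Rmin_l]).
  assert (Hy2 : Rabs (y - x) < eps / K) by (eapply Rlt_le_trans; [exact Hyx| apply Rmin_r]).
  specialize (H1 y Hy Hne Hy1).
  set (q := (T y - T x) / (y - x)) in *.
  assert (Hq : T y - T x = q * (y - x)) by (unfold q; field; lra).
  rewrite Hq, Rabs_mult.
  assert (Rabs q < K).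
  { unfold K. replace q with ((q - Td x) + Td x) by ring.
    eapply Rle_lt_trans; [apply Rabs_triang|]. lra. }
  assert (Rabs (y - x) * K < eps).
  { apply (Rmult_lt_compat_r K) in Hy2; auto. unfold Rdiv in Hy2.
    rewrite Rmult_assoc, Rinv_l in Hy2 by lra. lra. }
  pose proof (Rabs_pos (y - x)). pose proof (Rabs_pos q). nra.
Qed.

Lemma deriv_sign (T Td : R -> R) x : deriv_on01 T Td -> 0 <= x <= 1 -> 0 < Td x ->
  exists d, 0 < d /\ forall y, 0 <= y <= 1 -> Rabs (y - x) < d ->
    (x < y -> T x < T y) /\ (y < x -> T y < T x).
Proof.
  intros Hd Hx Hp.
  destruct (Hd x Hx (Td x / 2) ltac:(lra)) as [d [Hd0 H]].
  exists d; split; auto. intros y Hy Hyx.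
  destruct (Req_dec y x) as [->|Hne]; [split; lra|].
  specialize (H y Hy Hne Hyx).
  set (q := (T y - T x) / (y - x)) in *.
  assert (Hq : T y - T x = q * (y - x)) by (unfold q; field; lra).
  apply Rabs_def2 in H. split; intros; nra.
Qed.

Lemma limit_in01 (a : nat -> R) l : Un_cv a l -> (forall n, 0 <= a n <= 1) -> 0 <= l <= 1.
Proof.
  intros Hc Ha. split; apply Rnot_lt_le; intros Hl.
  - destruct (Hc (- l) ltac:(lra)) as [N HN]. specialize (HN N (le_n _)).
    unfold R_dist in HN. apply Rabs_def2 in HN. specialize (Ha N). lra.
  - destruct (Hc (l - 1) ltac:(lra)) as [N HN]. specialize (HN N (le_n _)).
    unfold R_dist in HN. apply Rabs_def2 in HN. specialize (Ha N). lra.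
Qed.


Lemma cont_seq01 (h : R -> R) (a : nat -> R) l : cont_on01 h -> (forall n, 0 <= a n <= 1) ->
  0 <= l <= 1 -> Un_cv a l -> Un_cv (fun n => h (a n)) (h l).
Proof.
  intros Hc Ha Hl Hcv eps Heps.
  destruct (Hc l Hl eps Heps) as [d [Hd H]].
  destruct (Hcv d Hd) as [N HN]. exists N. intros n Hn.
  unfold R_dist. apply H; auto. apply HN; auto.
Qed.

Lemma Un_cv_S (a : nat -> R) l : Un_cv a l -> Un_cv (fun n => a (S n)) l.
Proof. intros H eps He. destruct (H eps He) as [N HN]. exists N. intros n Hn. apply HN. lia. Qed.

Lemma in_Sigma_shift m w : in_Sigma m w -> in_Sigma m (shift w).
Proof. intros H k. apply H. Qed.

Lemma in_Sigma_shiftn m w k : in_Sigma m w -> in_Sigma m (shiftn k w).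
Proof. intros H j. apply H. Qed.

Lemma ifs_in01 m (T : nat -> R -> R) :
  (forall i, (i < m)%nat -> forall x, 0 <= x <= 1 -> 0 <= T i x <= 1) ->
  forall n w x, in_Sigma m w -> 0 <= x <= 1 -> 0 <= ifs_comp T w n x <= 1.
Proof.
  intros Hm n. induction n as [|n IH]; intros w x Hw Hx; simpl; auto.
  apply Hm; [apply Hw|]. apply IH; auto. apply in_Sigma_shift; auto.
Qed.

Lemma Pi_in01 m (T : nat -> R -> R) Pi :
  (forall i, (i < m)%nat -> forall x, 0 <= x <= 1 -> 0 <= T i x <= 1) ->
  (forall w, in_Sigma m w -> Un_cv (fun n => ifs_comp T w n 0) (Pi w)) ->
  forall u, in_Sigma m u -> 0 <= Pi u <= 1.
Proof.
  intros Hm HPi u Hu. apply (limit_in01 _ _ (HPi u Hu)).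
  intros n. apply (ifs_in01 m); auto; lra.
Qed.

Lemma Pi_eq m (T Td : nat -> R -> R) Pi :
  (forall i, (i < m)%nat -> forall x, 0 <= x <= 1 -> 0 <= T i x <= 1) ->
  (forall i, (i < m)%nat -> deriv_on01 (T i) (Td i)) ->
  (forall w, in_Sigma m w -> Un_cv (fun n => ifs_comp T w n 0) (Pi w)) ->
  forall u, in_Sigma m u -> Pi u = T (u O) (Pi (shift u)).
Proof.
  intros Hm Hd HPi u Hu.
  pose proof (Un_cv_S _ _ (HPi u Hu)) as H1. simpl in H1.
  assert (Hs : in_Sigma m (shift u)) by (apply in_Sigma_shift; auto).
  pose proof (cont_seq01 (T (u O)) (fun n => ifs_comp T (shift u) n 0) (Pi (shift u))
     (deriv_cont _ _ (Hd _ (Hu O)))) as H2.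
  eapply UL_sequence; [exact H1|]. apply H2.
  - intros n. apply (ifs_in01 m); auto; lra.
  - apply (Pi_in01 m T); auto.
  - apply HPi; auto.
Qed.

Lemma own_region (T Td : R -> R) p :
  deriv_on01 T Td -> 0 < Td p -> 0 <= p <= 1 -> T p = p ->
  exists eta, 0 < eta /\ forall y, 0 < y < 1 -> Rabs (y - p) < eta ->
    exists z, 0 < z < 1 /\ T z = y.
Proof.
  intros Hd Hp Hp01 Hfix.
  pose proof (deriv_cont _ _ Hd) as Hc.
  destruct (deriv_sign T Td p Hd Hp01 Hp) as [d0 [Hd0 Hs]].
  set (h := Rmin (d0 / 2) (1 / 2)).
  assert (Hh : 0 < h) by (apply Rmin_glb_lt; lra).
  assert (Hhd : h < d0) by (unfold h; pose proof (Rmin_l (d0/2) (1/2)); lra).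
  set (a := Rmax 0 (p - h)). set (b := Rmin 1 (p + h)).
  assert (Ha : 0 <= a <= p /\ p - h <= a) by (unfold a, Rmax; destruct Rle_dec; lra).
  assert (Hb : p <= b <= 1 /\ b <= p + h) by (unfold b, Rmin; destruct Rle_dec; lra).
  assert (Hlo : exists e, 0 < e /\ forall y, 0 < y -> p - e < y -> T a < y).
  { destruct (Rlt_dec a p) as [Hap|Hap].
    - exists (p - T a). destruct (Hs a) as [_ H2]; [lra| rewrite Rabs_left by lra; lra|].
      specialize (H2 Hap). split; [lra|]. intros; lra.
    - assert (a = p) by lra. assert (p = 0).
      { assert (a = 0 \/ a = p - h) by (unfold a, Rmax; destruct Rle_dec; auto). lra. }
      exists 1. split; [lra|]. intros y Hy _. replace a with p by lra. lra. }
  assert (Hhi : exists e, 0 < e /\ forall y, y < 1 -> y < p + e -> y < T b).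
  { destruct (Rlt_dec p b) as [Hbp|Hbp].
    - exists (T b - p). destruct (Hs b) as [H1 _]; [lra| rewrite Rabs_right by lra; lra|].
      specialize (H1 Hbp). split; [lra|]. intros; lra.
    - assert (b = p) by lra. assert (p = 1).
      { assert (b = 1 \/ b = p + h) by (unfold b, Rmin; destruct Rle_dec; auto). lra. }
      exists 1. split; [lra|]. intros y Hy _. replace b with p by lra. lra. }
  destruct Hlo as [e1 [He1 H1]]. destruct Hhi as [e2 [He2 H2]].
  exists (Rmin e1 e2). split; [apply Rmin_glb_lt; auto|].
  intros y Hy Hyp. pose proof (Rmin_l e1 e2). pose proof (Rmin_r e1 e2).
  apply Rabs_def2 in Hyp.
  assert (Hay : T a < y) by (apply H1; lra).
  assert (Hyb : y < T b) by (apply H2; lra).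
  destruct (IVT01 T a b y Hc) as [z [Hz Hz2]]; try lra.
  exists z. split; [|auto].
  assert (z <> a) by (intro; subst; lra). assert (z <> b) by (intro; subst; lra).
  lra.
Qed.

Lemma perturb (T Td : R -> R) z lo hi :
  deriv_on01 T Td -> (forall x, 0 <= x <= 1 -> 0 < Td x) ->
  (forall x, 0 <= x <= 1 -> 0 <= T x <= 1) -> 0 <= z <= 1 ->
  0 <= lo -> lo < hi -> hi <= 1 ->
  lo <= T z <= hi -> (lo < T z \/ T z = 0) -> (T z < hi \/ T z = 1) ->
  exists z', 0 < z' < 1 /\ lo < T z' < hi.
Proof.
  intros Hd Hpos Hm Hz Hlo Hlh Hhi Hb Hl Hh.
  pose proof (deriv_cont _ _ Hd) as Hc.
  pose proof (Hm z Hz) as Hyz.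
  destruct (Req_dec (T z) 0) as [H0|H0].
  -
    assert (lo = 0) by (destruct Hl; lra).
    assert (Hz0 : z = 0).
    { destruct (Req_dec z 0) as [|Hne]; auto. exfalso.
      destruct (deriv_sign T Td z Hd Hz (Hpos z Hz)) as [d [Hdp Hs]].
      set (s := Rmin (d/2) z).
      assert (0 < s) by (apply Rmin_glb_lt; lra).
      assert (s <= z) by apply Rmin_r. assert (s <= d/2) by apply Rmin_l.
      destruct (Hs (z - s)) as [_ Hq]; [lra| rewrite Rabs_left by lra; lra|].
      specialize (Hq ltac:(lra)). pose proof (Hm (z - s) ltac:(lra)). lra. }
    subst z.
    destruct (deriv_sign T Td 0 Hd Hz (Hpos 0 Hz)) as [d [Hdp Hs]].
    destruct (Hc 0 Hz hi ltac:(lra)) as [r [Hr Hcr]].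
    set (s := Rmin (Rmin d r) 1 / 2).
    assert (0 < Rmin (Rmin d r) 1) by (repeat apply Rmin_glb_lt; lra).
    assert (Hs0 : 0 < s) by (unfold s; lra).
    assert (s <= d / 2 /\ s <= r / 2 /\ s <= 1/2).
    { unfold s. pose proof (Rmin_l (Rmin d r) 1). pose proof (Rmin_r (Rmin d r) 1).
      pose proof (Rmin_l d r). pose proof (Rmin_r d r). lra. }
    exists s. split; [lra|].
    destruct (Hs s) as [Hq _]; [lra| rewrite Rabs_right by lra; lra|].
    specialize (Hq Hs0). specialize (Hcr s ltac:(lra) ltac:(rewrite Rabs_right by lra; lra)).
    apply Rabs_def2 in Hcr. lra.
  - destruct (Req_dec (T z) 1) as [H1|H1].
    + assert (hi = 1) by (destruct Hh; lra).
      assert (Hz1 : z = 1).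
      { destruct (Req_dec z 1) as [|Hne]; auto. exfalso.
        destruct (deriv_sign T Td z Hd Hz (Hpos z Hz)) as [d [Hdp Hs]].
        set (s := Rmin (d/2) (1 - z)).
        assert (0 < s) by (apply Rmin_glb_lt; lra).
        assert (s <= 1 - z) by apply Rmin_r. assert (s <= d/2) by apply Rmin_l.
        destruct (Hs (z + s)) as [Hq _]; [lra| rewrite Rabs_right by lra; lra|].
        specialize (Hq ltac:(lra)). pose proof (Hm (z + s) ltac:(lra)). lra. }
      subst z.
      destruct (deriv_sign T Td 1 Hd Hz (Hpos 1 Hz)) as [d [Hdp Hs]].
      destruct (Hc 1 Hz (1 - lo) ltac:(lra)) as [r [Hr Hcr]].
      set (s := Rmin (Rmin d r) 1 / 2).
      assert (0 < Rmin (Rmin d r) 1) by (repeat apply Rmin_glb_lt; lra).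
    assert (Hs0 : 0 < s) by (unfold s; lra).
      assert (s <= d / 2 /\ s <= r / 2 /\ s <= 1/2).
      { unfold s. pose proof (Rmin_l (Rmin d r) 1). pose proof (Rmin_r (Rmin d r) 1).
        pose proof (Rmin_l d r). pose proof (Rmin_r d r). lra. }
      exists (1 - s). split; [lra|].
      destruct (Hs (1 - s)) as [_ Hq]; [lra| rewrite Rabs_left by lra; lra|].
      specialize (Hq ltac:(lra)).
      specialize (Hcr (1 - s) ltac:(lra) ltac:(rewrite Rabs_left by lra; lra)).
      apply Rabs_def2 in Hcr. lra.
    + assert (lo < T z < hi) by (destruct Hl, Hh; lra).
      destruct (Hc z Hz (Rmin (T z - lo) (hi - T z)) ltac:(apply Rmin_glb_lt; lra)) as [r [Hr Hcr]].
      set (t := Rmin r (1/2)).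
      assert (0 < t) by (apply Rmin_glb_lt; lra).
      assert (t <= r) by apply Rmin_l. assert (t <= 1/2) by apply Rmin_r.
      assert (0 <= z * (1 - t) <= 1 - t) by (split; [apply Rmult_le_pos|]; nra).
      exists (z + t * (1/2 - z)). split; [split; nra|].
      assert (Habs : Rabs (z + t * (1/2 - z) - z) < r).
      { replace (z + t * (1/2 - z) - z) with (t * (1/2 - z)) by ring.
        rewrite Rabs_mult, (Rabs_right t) by lra.
        assert (Rabs (1/2 - z) <= 1/2) by (apply Rabs_le; lra).
        nra. }
      specialize (Hcr (z + t * (1/2 - z)) ltac:(split; nra) Habs).
      pose proof (Rmin_l (T z - lo) (hi - T z)). pose proof (Rmin_r (T z - lo) (hi - T z)).
      apply Rabs_def2 in Hcr. lra.
Qed.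

Lemma own m (T Td : nat -> R -> R) i p :
  (forall i, (i < m)%nat -> forall x, 0 <= x <= 1 -> 0 <= T i x <= 1) ->
  (forall i, (i < m)%nat -> deriv_on01 (T i) (Td i)) ->
  (forall i, (i < m)%nat -> forall x, 0 <= x <= 1 -> 0 < Td i x) ->
  (forall i j, (i < m)%nat -> (j < m)%nat -> i <> j ->
     forall x y, 0 < x < 1 -> 0 < y < 1 -> T i x <> T j y) ->
  (i < m)%nat -> 0 <= p <= 1 -> T i p = p ->
  exists eta, 0 < eta /\ forall j z, (j < m)%nat -> 0 <= z <= 1 ->
    Rabs (T j z - p) < eta -> j = i.
Proof.
  intros Hm Hd Hpos Hdisj Hi Hp Hfix.
  destruct (own_region (T i) (Td i) p (Hd i Hi) (Hpos i Hi p Hp) Hp Hfix) as [eta [He Hreg]].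
  exists eta. split; auto. intros j z Hj Hz Hy.
  destruct (Nat.eq_dec j i) as [|Hne]; auto. exfalso.
  apply Rabs_def2 in Hy. pose proof (Hm j Hj z Hz).
  destruct (perturb (T j) (Td j) z (Rmax 0 (p - eta)) (Rmin 1 (p + eta)) (Hd j Hj) (Hpos j Hj) (Hm j Hj) Hz)
    as [z' [Hz' Hyz]].
  - apply Rmax_l.
  - unfold Rmax, Rmin; repeat destruct Rle_dec; lra.
  - apply Rmin_l.
  - unfold Rmax, Rmin; repeat destruct Rle_dec; lra.
  - unfold Rmax; destruct Rle_dec; lra.
  - unfold Rmin; destruct Rle_dec; lra.
  - assert (0 < T j z' < 1 /\ Rabs (T j z' - p) < eta).
    { unfold Rmax, Rmin in Hyz; repeat destruct Rle_dec in Hyz;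
      (split; [lra| apply Rabs_def1; lra]). }
    destruct H0 as [H0 H1].
    destruct (Hreg _ H0 H1) as [x [Hx Hx2]].
    apply (Hdisj i j Hi Hj (not_eq_sym Hne) x z' Hx Hz'). auto.
Qed.

Lemma maxaway (h : R -> R) p eta : cont_on01 h -> 0 <= p <= 1 -> 0 < eta ->
  (forall y, 0 <= y <= 1 -> Rabs (y - p) >= eta -> h y < 1) ->
  exists e, 0 < e /\ forall y, 0 <= y <= 1 -> Rabs (y - p) >= eta -> h y <= 1 - e.
Proof.
  intros Hc Hp He H.
  assert (HL : exists e, 0 < e /\ forall y, 0 <= y <= p - eta -> h y <= 1 - e).
  { destruct (Rle_dec 0 (p - eta)) as [Hle|Hlt].
    - destruct (EV_max h 0 (p - eta) Hc) as [y0 [Hy0 Hm]]; try lra.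
      assert (h y0 < 1) by (apply H; [lra| rewrite Rabs_left by lra; lra]).
      exists (1 - h y0). split; [lra|]. intros y Hy. specialize (Hm y Hy). lra.
    - exists 1. split; [lra|]. intros; lra. }
  assert (HR : exists e, 0 < e /\ forall y, p + eta <= y <= 1 -> h y <= 1 - e).
  { destruct (Rle_dec (p + eta) 1) as [Hle|Hlt].
    - destruct (EV_max h (p + eta) 1 Hc) as [y0 [Hy0 Hm]]; try lra.
      assert (h y0 < 1) by (apply H; [lra| rewrite Rabs_right by lra; lra]).
      exists (1 - h y0). split; [lra|]. intros y Hy. specialize (Hm y Hy). lra.
    - exists 1. split; [lra|]. intros; lra. }
  destruct HL as [e1 [He1 H1]]. destruct HR as [e2 [He2 H2]].
  exists (Rmin e1 e2). split; [apply Rmin_glb_lt; auto|].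
  pose proof (Rmin_l e1 e2). pose proof (Rmin_r e1 e2).
  intros y Hy Hyp. unfold Rabs in Hyp. destruct Rcase_abs in Hyp.
  - specialize (H1 y ltac:(lra)). lra.
  - specialize (H2 y ltac:(lra)). lra.
Qed.

Lemma Td_le1 m (Td : nat -> R -> R) Pi i y :
  (forall i, (i < m)%nat -> Td i (Pi (constseq i)) <= 1) ->
  (forall i, (i < m)%nat -> forall x, 0 <= x <= 1 -> x <> Pi (constseq i) -> 0 < Td i x < 1) ->
  (i < m)%nat -> 0 <= y <= 1 -> Td i y <= 1.
Proof.
  intros H1 H2 Hi Hy. destruct (Req_dec y (Pi (constseq i))) as [->|Hne].
  - apply H1; auto.
  - pose proof (H2 i Hi y Hy Hne); lra.
Qed.

Lemma const_Sigma m i : (i < m)%nat -> in_Sigma m (constseq i).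
Proof. intros H k. exact H. Qed.

Lemma delta_lemma
  (m : nat) (T Td : nat -> R -> R) (Pi : (nat -> nat) -> R)
  (hmaps : forall i, (i < m)%nat -> forall x, 0 <= x <= 1 -> 0 <= T i x <= 1)
  (hderiv : forall i, (i < m)%nat -> deriv_on01 (T i) (Td i))
  (hC1 : forall i, (i < m)%nat -> cont_on01 (Td i))
  (hpos : forall i, (i < m)%nat -> forall x, 0 <= x <= 1 -> 0 < Td i x)
  (hdisj : forall i j, (i < m)%nat -> (j < m)%nat -> i <> j ->
     forall x y, 0 < x < 1 -> 0 < y < 1 -> T i x <> T j y)
  (hPi : forall w, in_Sigma m w -> Un_cv (fun n => ifs_comp T w n 0) (Pi w))
  (hfix : forall i, (i < m)%nat -> T i (Pi (constseq i)) = Pi (constseq i))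
  (hle1 : forall i, (i < m)%nat -> Td i (Pi (constseq i)) <= 1)
  (hlt1 : forall i, (i < m)%nat -> forall x, 0 <= x <= 1 -> x <> Pi (constseq i) ->
     0 < Td i x < 1) :
  exists delta, 0 < delta /\ forall v, in_Sigma m v -> gpot Td Pi v < delta ->
    indI m Td Pi (v O) /\ v 1%nat = v O.
Proof.
  assert (Hp : forall i, (i < m)%nat -> 0 <= Pi (constseq i) <= 1).
  { intros i Hi. apply (Pi_in01 m T); auto. apply const_Sigma; auto. }
  destruct (fin_R_down (fun i => True)
    (fun i eta => forall j z, (j < m)%nat -> 0 <= z <= 1 ->
       Rabs (T j z - Pi (constseq i)) < eta -> j = i) m) as [eta [Heta Hown]].
  { intros i B B' H [HB' HBB'] j z Hj Hz Hlt. apply (H j z Hj Hz). lra. }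
  { intros i Hi _. destruct (own m T Td i (Pi (constseq i))) as [eta [He H]]; auto.
    exists eta; split; auto. }
  destruct (fin_R_down (fun i => True)
    (fun i e => forall y, 0 <= y <= 1 -> Td i y > 1 - e ->
        indI m Td Pi i /\ Rabs (y - Pi (constseq i)) < eta) m) as [e0 [He0 Hc]].
  { intros i B B' H [HB' HBB'] y Hy Hgt. apply H; auto. lra. }
  { intros i Hi _.
    destruct (classic (indI m Td Pi i)) as [HI|HnI].
    - destruct (maxaway (Td i) (Pi (constseq i)) eta (hC1 i Hi) (Hp i Hi) Heta) as [e [He H]].
      { intros y Hy Hyp. apply hlt1; auto. intros ->. rewrite Rminus_diag, Rabs_R0 in Hyp. lra. }
      exists e. split; auto. intros y Hy Hgt. split; auto.
      apply Rnot_ge_lt. intros Hge. specialize (H y Hy Hge). lra.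
    - assert (Htp : Td i (Pi (constseq i)) < 1).
      { destruct (hle1 i Hi); auto. exfalso. apply HnI. split; auto. }
      destruct (hC1 i Hi _ (Hp i Hi) ((1 - Td i (Pi (constseq i))) / 2) ltac:(lra)) as [r [Hr Hcr]].
      destruct (maxaway (Td i) (Pi (constseq i)) (r / 2) (hC1 i Hi) (Hp i Hi) ltac:(lra)) as [e [He H]].
      { intros y Hy Hyp. apply hlt1; auto. intros ->. rewrite Rminus_diag, Rabs_R0 in Hyp. lra. }
      exists (Rmin e ((1 - Td i (Pi (constseq i))) / 2)). split.
      { apply Rmin_glb_lt; lra. }
      pose proof (Rmin_l e ((1 - Td i (Pi (constseq i))) / 2)).
      pose proof (Rmin_r e ((1 - Td i (Pi (constseq i))) / 2)).
      intros y Hy Hgt. exfalso.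
      destruct (Rge_dec (Rabs (y - Pi (constseq i))) (r / 2)) as [Hge|Hlt].
      + specialize (H y Hy Hge). lra.
      + specialize (Hcr y Hy ltac:(lra)). apply Rabs_def2 in Hcr. lra. }
  set (e := Rmin e0 (1/2)).
  assert (He : 0 < e <= 1/2) by (unfold e; split; [apply Rmin_glb_lt; lra| apply Rmin_r]).
  assert (Hee0 : e <= e0) by apply Rmin_l.
  exists (- ln (1 - e)). split.
  { assert (ln (1 - e) < ln 1) by (apply ln_increasing; lra). rewrite ln_1 in H. lra. }
  intros v Hv Hg. unfold gpot in Hg.
  assert (Hv0 : (v O < m)%nat) by apply Hv.
  assert (Hsv : in_Sigma m (shift v)) by (apply in_Sigma_shift; auto).
  assert (Hy : 0 <= Pi (shift v) <= 1) by (apply (Pi_in01 m T); auto).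
  assert (Hgt : Td (v O) (Pi (shift v)) > 1 - e).
  { apply ln_lt_inv; [lra| apply hpos; auto| lra]. }
  destruct (Hc (v O) Hv0 I (Pi (shift v)) Hy ltac:(lra)) as [HI Hclose].
  split; auto.
  rewrite (Pi_eq m T Td Pi hmaps hderiv hPi (shift v) Hsv) in Hclose.
  apply (Hown (v O) Hv0 I (shift v O) (Pi (shift (shift v)))); [apply Hsv| |exact Hclose].
  apply (Pi_in01 m T); auto. apply in_Sigma_shift; auto.
Qed.

Lemma gpot_bounds
  (m : nat) (T Td : nat -> R -> R) (Pi : (nat -> nat) -> R)
  (hmaps : forall i, (i < m)%nat -> forall x, 0 <= x <= 1 -> 0 <= T i x <= 1)
  (hC1 : forall i, (i < m)%nat -> cont_on01 (Td i))
  (hpos : forall i, (i < m)%nat -> forall x, 0 <= x <= 1 -> 0 < Td i x)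
  (hPi : forall w, in_Sigma m w -> Un_cv (fun n => ifs_comp T w n 0) (Pi w))
  (hle1 : forall i, (i < m)%nat -> Td i (Pi (constseq i)) <= 1)
  (hlt1 : forall i, (i < m)%nat -> forall x, 0 <= x <= 1 -> x <> Pi (constseq i) ->
     0 < Td i x < 1) :
  exists G, forall v, in_Sigma m v -> 0 <= gpot Td Pi v <= G.
Proof.
  destruct (fin_R_down (fun i => True)
    (fun i c => forall y, 0 <= y <= 1 -> c <= Td i y) m) as [c [Hc0 Hc]].
  { intros i B B' H [HB' HBB'] y Hy. specialize (H y Hy). lra. }
  { intros i Hi _. destruct (EV_min (Td i) 0 1 (hC1 i Hi)) as [y0 [Hy0 H]]; try lra.
    exists (Td i y0). split; auto. }
  exists (- ln c). intros v Hv. unfold gpot.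
  assert (Hv0 : (v O < m)%nat) by apply Hv.
  assert (Hy : 0 <= Pi (shift v) <= 1) by (apply (Pi_in01 m T); auto; apply in_Sigma_shift; auto).
  pose proof (hpos _ Hv0 _ Hy). pose proof (Td_le1 m Td Pi _ _ hle1 hlt1 Hv0 Hy).
  pose proof (Hc _ Hv0 I _ Hy).
  split.
  - destruct (Rle_lt_or_eq_dec _ _ H0) as [Hl|He].
    + assert (ln (Td (v O) (Pi (shift v))) < ln 1) by (apply ln_increasing; lra).
      rewrite ln_1 in H2; lra.
    + rewrite He, ln_1; lra.
  - destruct (Rle_lt_or_eq_dec _ _ H1) as [Hl|He].
    + assert (ln c < ln (Td (v O) (Pi (shift v)))) by (apply ln_increasing; lra). lra.
    + rewrite He; lra.
Qed.

Definition upd (u : nat -> nat) (n a : nat) : nat -> nat :=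
  fun k => if Nat.ltb k n then u k else a.

Definition Ucyl m (f : (nat -> nat) -> R) n (u : nat -> nat) : Prop :=
  forall B, exists v, in_Sigma m v /\ (forall k, (k < n)%nat -> v k = u k) /\ f v > B.

Lemma Ucyl_step m f n u : Ucyl m f n u -> exists a, (a < m)%nat /\ Ucyl m f (S n) (upd u n a).
Proof.
  intros HU. apply NNPP. intros Hno.
  assert (Hb : forall a, (a < m)%nat -> True -> exists B, forall v, in_Sigma m v ->
     (forall k, (k < S n)%nat -> v k = upd u n a k) -> f v <= B).
  { intros a Ha _. apply NNPP. intros Hn. apply Hno. exists a. split; auto.
    intros B. apply NNPP. intros Hn2. apply Hn. exists B. intros v Hv Hk.
    apply Rnot_gt_le. intros Hgt. apply Hn2. exists v. auto. }
  destruct (fin_R_up (fun _ => True) (fun a B => forall v, in_Sigma m v ->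
     (forall k, (k < S n)%nat -> v k = upd u n a k) -> f v <= B) m) as [B HB].
  { intros i B B' H HBB' v Hv Hk. specialize (H v Hv Hk). lra. }
  { exact Hb. }
  destruct (HU B) as [v [Hv [Hk Hf]]].
  assert (f v <= B); [|lra].
  apply (HB (v n) (Hv n) I v Hv). intros k Hkn. unfold upd.
  destruct (Nat.ltb_spec k n).
  - apply Hk; auto.
  - f_equal; lia.
Qed.

Lemma f_bounded m f : cont_Sigma m f -> exists B, forall v, in_Sigma m v -> f v <= B.
Proof.
  intros Hf. apply NNPP. intros Hno.
  assert (HU0 : Ucyl m f 0 (fun _ => 0%nat)).
  { intros B. apply NNPP. intros Hn. apply Hno. exists B. intros v Hv.
    apply Rnot_gt_le. intros Hgt. apply Hn. exists v. repeat split; auto. intros; lia. }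
  assert (Hst : forall n u, {a | Ucyl m f n u -> (a < m)%nat /\ Ucyl m f (S n) (upd u n a)}).
  { intros n u. apply constructive_indefinite_description.
    destruct (classic (Ucyl m f n u)) as [H|H].
    - destruct (Ucyl_step m f n u H) as [a Ha]. exists a; auto.
    - exists 0%nat. intros; contradiction. }
  set (stp := fun n u => proj1_sig (Hst n u)).
  assert (Hstp : forall n u, Ucyl m f n u -> (stp n u < m)%nat /\ Ucyl m f (S n) (upd u n (stp n u))).
  { intros n u. unfold stp. destruct (Hst n u); auto. }
  set (W := fix W n := match n with O => (fun _ : nat => 0%nat) | S n => upd (W n) n (stp n (W n)) end).
  assert (HW : forall n, Ucyl m f n (W n)).
  { induction n as [|n IH]; [exact HU0|]. apply (Hstp n (W n) IH). }
  assert (Hstab : forall n k, (k < n)%nat -> W n k = W (S k) k).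
  { induction n as [|n IH]; intros k Hk; [lia|].
    change (W (S n)) with (upd (W n) n (stp n (W n))). unfold upd.
    destruct (Nat.ltb_spec k n).
    - rewrite IH; auto.
    - assert (k = n) by lia. subst k.
      change (W (S n) n) with (upd (W n) n (stp n (W n)) n). unfold upd. rewrite Nat.ltb_irrefl. reflexivity. }
  set (ws := fun k => W (S k) k).
  assert (Hws : in_Sigma m ws).
  { intros k. unfold ws. change (W (S k)) with (upd (W k) k (stp k (W k))). unfold upd.
    rewrite Nat.ltb_irrefl. apply (Hstp k (W k) (HW k)). }
  destruct (Hf ws Hws 1 ltac:(lra)) as [N HN].
  destruct (HW N (f ws + 1)) as [v [Hv [Hk Hfv]]].
  assert (Rabs (f v - f ws) < 1).
  { apply HN; auto. intros k Hkn. rewrite Hk; auto. }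
  apply Rabs_def2 in H. lra.
Qed.

Fixpoint sumf (a : nat -> R) (n : nat) : R :=
  match n with O => 0 | S n => sumf a n + a n end.

Lemma birk_sumf F w n : birk_sum F w n = sumf (fun k => F (shiftn k w)) n.
Proof. induction n; simpl; auto. rewrite IHn; auto. Qed.

Lemma sumf_le a b n : (forall k, (k < n)%nat -> a k <= b k) -> sumf a n <= sumf b n.
Proof. induction n; simpl; intros H; [lra|]. pose proof (H n ltac:(lia)). pose proof (IHn ltac:(intros; apply H; lia)). lra. Qed.

Lemma sumf_plus a b n : sumf (fun k => a k + b k) n = sumf a n + sumf b n.
Proof. induction n; simpl; [lra|]. rewrite IHn; lra. Qed.

Lemma sumf_scal c a n : sumf (fun k => c * a k) n = c * sumf a n.
Proof. induction n; simpl; [lra|]. rewrite IHn; lra. Qed.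

Lemma sumf_const c n : sumf (fun _ => c) n = INR n * c.
Proof. induction n; simpl sumf; [simpl; lra|]. rewrite IHn, S_INR; lra. Qed.

Lemma sumf_nonneg b n : (forall k, 0 <= b k) -> 0 <= sumf b n.
Proof. intros H; induction n; simpl; [lra|]. pose proof (H n); lra. Qed.

Lemma sumf_ub b n G : (forall k, b k <= G) -> sumf b n <= INR n * G.
Proof. intros H; rewrite <- sumf_const. apply sumf_le. auto. Qed.

Lemma sumf_split b n t : sumf b (n + t) = sumf b t + sumf (fun k => b (k + t)%nat) n.
Proof. induction n; simpl; [lra|]. rewrite IHn; lra. Qed.

Lemma sumf_mono_n b n n' : (forall k, 0 <= b k) -> (n <= n')%nat -> sumf b n <= sumf b n'.
Proof.
  intros H Hn. replace n' with ((n' - n) + n)%nat by lia. rewrite sumf_split.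
  pose proof (sumf_nonneg (fun k => b (k + n)%nat) (n' - n) ltac:(intros; apply H)). lra.
Qed.

Lemma sumf_ge_term b n t : (forall k, 0 <= b k) -> (t < n)%nat -> b t <= sumf b n.
Proof.
  intros H Ht. induction n; [lia|]. simpl.
  destruct (Nat.eq_dec t n) as [->|Hne].
  - pose proof (sumf_nonneg b n H). lra.
  - pose proof (IHn ltac:(lia)). pose proof (H n). lra.
Qed.

Lemma sumf_double b n N : (forall k, 0 <= b k) ->
  sumf (fun k => sumf (fun t => b (k + t)%nat) N) n <= INR N * sumf b (n + N).
Proof.
  intros H. induction N as [|N IH].
  - simpl. rewrite (sumf_const 0 n). lra.
  - simpl sumf at 1. rewrite sumf_plus, S_INR.
    assert (H1 : sumf b (n + N) <= sumf b (n + S N)) by (apply sumf_mono_n; auto; lia).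
    assert (H2 : sumf (fun k => b (k + N)%nat) n <= sumf b (n + S N)).
    { rewrite sumf_split with (t := N) in H1.
      pose proof (sumf_nonneg b N H). lra. }
    pose proof (pos_INR N). pose proof (sumf_nonneg b (n + N) H).
    assert (INR N * sumf b (n + N) <= INR N * sumf b (n + S N)) by (apply Rmult_le_compat_l; lra).
    lra.
Qed.

Lemma main_ineq (a b : nat -> R) B c G delta N :
  0 < delta -> c <= B -> (forall k, 0 <= b k <= G) -> (forall k, a k <= B) ->
  (forall k, (forall t, (t < N)%nat -> b (k + t)%nat < delta) -> a k <= c) ->
  forall n, sumf a n <= INR n * c + (B - c) / delta * (INR N * (sumf b n + INR N * G)).
Proof.
  intros Hd HcB Hb Ha Hgood n.
  set (K := (B - c) / delta).
  assert (HK : 0 <= K) by (unfold K; apply Rmult_le_pos; [lra| left; apply Rinv_0_lt_compat; lra]).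
  assert (Hb0 : forall k, 0 <= b k) by (intros k; apply Hb).
  assert (Hpt : forall k, a k <= c + K * sumf (fun t => b (k + t)%nat) N).
  { intros k. destruct (classic (forall t, (t < N)%nat -> b (k + t)%nat < delta)) as [Hg|Hg].
    - pose proof (Hgood k Hg). pose proof (sumf_nonneg (fun t => b (k + t)%nat) N ltac:(intros; apply Hb0)).
      assert (0 <= K * sumf (fun t => b (k + t)%nat) N) by (apply Rmult_le_pos; auto). lra.
    - apply not_all_ex_not in Hg. destruct Hg as [t Ht].
      apply imply_to_and in Ht. destruct Ht as [HtN Ht]. apply Rnot_lt_le in Ht.
      pose proof (sumf_ge_term (fun t => b (k + t)%nat) N t ltac:(intros; apply Hb0) HtN).
      assert (K * delta <= K * sumf (fun t => b (k + t)%nat) N) by (apply Rmult_le_compat_l; lra).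
      assert (K * delta = B - c) by (unfold K; field; lra).
      pose proof (Ha k). lra. }
  eapply Rle_trans; [apply sumf_le; intros k _; apply Hpt|].
  rewrite sumf_plus, sumf_const, sumf_scal.
  pose proof (sumf_double b n N Hb0).
  rewrite Nat.add_comm, sumf_split in H.
  pose proof (sumf_ub (fun k => b (k + n)%nat) N G ltac:(intros; apply Hb)).
  pose proof (pos_INR N).
  assert (INR N * sumf (fun k => b (k + n)%nat) N <= INR N * (INR N * G)) by (apply Rmult_le_compat_l; lra).
  assert (K * sumf (fun k => sumf (fun t => b (k + t)%nat) N) n <= K * (INR N * (sumf b n + INR N * G))).
  { apply Rmult_le_compat_l; auto. lra. }
  lra.
Qed.

Lemma nj_ge (nj : nat -> nat) : (forall j, (nj j < nj (S j))%nat) -> forall j, (j <= nj j)%nat.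
Proof. intros H j. induction j; [lia|]. specialize (H j). lia. Qed.

Lemma main_upper
  (m : nat) (T Td : nat -> R -> R) (Pi : (nat -> nat) -> R) (f : (nat -> nat) -> R)
  (hmaps : forall i, (i < m)%nat -> forall x, 0 <= x <= 1 -> 0 <= T i x <= 1)
  (hderiv : forall i, (i < m)%nat -> deriv_on01 (T i) (Td i))
  (hC1 : forall i, (i < m)%nat -> cont_on01 (Td i))
  (hpos : forall i, (i < m)%nat -> forall x, 0 <= x <= 1 -> 0 < Td i x)
  (hdisj : forall i j, (i < m)%nat -> (j < m)%nat -> i <> j ->
     forall x y, 0 < x < 1 -> 0 < y < 1 -> T i x <> T j y)
  (hPi : forall w, in_Sigma m w -> Un_cv (fun n => ifs_comp T w n 0) (Pi w))
  (hfix : forall i, (i < m)%nat -> T i (Pi (constseq i)) = Pi (constseq i))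
  (hle1 : forall i, (i < m)%nat -> Td i (Pi (constseq i)) <= 1)
  (hlt1 : forall i, (i < m)%nat -> forall x, 0 <= x <= 1 -> x <> Pi (constseq i) ->
     0 < Td i x < 1)
  (hf : cont_Sigma m f)
  (nj : nat -> nat) (w : nat -> nat) (L : R) :
     (forall j, (0 < nj j)%nat) -> (forall j, (nj j < nj (S j))%nat) ->
     in_Sigma m w ->
     Un_cv (fun j => avg (nj j) (gpot Td Pi) w) 0 ->
     Un_cv (fun j => avg (nj j) f w) L ->
     exists i, indI m Td Pi i /\ L <= f (constseq i).
Proof.
  intros hn0 hinc Hw Hg Hf. apply NNPP. intros Hno.
  assert (Hlt : forall i, indI m Td Pi i -> f (constseq i) < L).
  { intros i Hi. apply Rnot_le_lt. intros Hle. apply Hno. exists i; auto. }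
  destruct (fin_R_down (indI m Td Pi) (fun i e => f (constseq i) + 3 * e <= L) m) as [eps [Heps Heps2]].
  { intros i B B' H [HB' HBB']. lra. }
  { intros i Hi HI. exists ((L - f (constseq i)) / 3). pose proof (Hlt i HI). split; lra. }
  destruct (fin_nat_up (indI m Td Pi) (fun i N => forall w', in_Sigma m w' ->
      (forall k, (k < N)%nat -> w' k = i) -> Rabs (f w' - f (constseq i)) < eps) m) as [N0 HN0].
  { intros i B B' H HBB' w' Hw' Hk. apply H; auto. intros k Hk'. apply Hk; lia. }
  { intros i Hi HI. destruct (hf (constseq i) (const_Sigma m i Hi) eps Heps) as [N HN].
    exists N. intros w' Hw' Hk. apply HN; auto. }
  set (N := S N0).
  destruct (delta_lemma m T Td Pi hmaps hderiv hC1 hpos hdisj hPi hfix hle1 hlt1) as [delta [Hdelta Hdl]].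
  destruct (gpot_bounds m T Td Pi hmaps hC1 hpos hPi hle1 hlt1) as [Gb HGb].
  destruct (f_bounded m f hf) as [B HB].
  set (c := L - 2 * eps). set (B' := Rmax B c).
  set (a := fun k => f (shiftn k w)). set (b := fun k => gpot Td Pi (shiftn k w)).
  assert (Hgood : forall k, (forall t, (t < N)%nat -> b (k + t)%nat < delta) -> a k <= c).
  { intros k Hk.
    assert (Hsame : forall t, (t <= N)%nat -> w (k + t)%nat = w k).
    { induction t as [|t IH]; intros Ht.
      - f_equal; lia.
      - destruct (Hdl (shiftn (k + t) w) (in_Sigma_shiftn m w _ Hw) (Hk t ltac:(lia))) as [_ Heq].
        unfold shiftn in Heq. simpl in Heq. rewrite <- IH by lia.
        replace (k + S t)%nat with (S (k + t)) by lia. exact Heq. }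
    destruct (Hdl (shiftn (k + 0) w) (in_Sigma_shiftn m w _ Hw) (Hk 0%nat ltac:(unfold N; lia))) as [HI _].
    unfold shiftn in HI. simpl in HI. replace (k + 0)%nat with k in HI by lia.
    assert (Hc : Rabs (f (shiftn k w) - f (constseq (w k))) < eps).
    { apply (HN0 (w k) (Hw k) HI). apply in_Sigma_shiftn; auto.
      intros j Hj. unfold shiftn. rewrite Nat.add_comm. apply Hsame. unfold N; lia. }
    pose proof (Heps2 (w k) (Hw k) HI). apply Rabs_def2 in Hc. unfold a, c. lra. }
  assert (Hineq := main_ineq a b B' c Gb delta N Hdelta (Rmax_r B c)
     ltac:(intros k; apply HGb; apply in_Sigma_shiftn; auto)
     ltac:(intros k; eapply Rle_trans; [apply HB, in_Sigma_shiftn; auto| apply Rmax_l]) Hgood).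
  set (K1 := (B' - c) / delta * INR N).
  set (K2 := (B' - c) / delta * (INR N * (INR N * Gb))).
  assert (HK1 : 0 <= K1).
  { unfold K1. apply Rmult_le_pos; [|apply pos_INR]. apply Rmult_le_pos.
    - pose proof (Rmax_r B c). fold B' in H. lra.
    - left; apply Rinv_0_lt_compat; lra. }
  assert (HK2 : 0 <= K2).
  { unfold K2. assert (0 <= Gb) by (pose proof (HGb w Hw); lra).
    apply Rmult_le_pos; [|apply Rmult_le_pos; [apply pos_INR| apply Rmult_le_pos; [apply pos_INR|lra]]].
    apply Rmult_le_pos.
    - pose proof (Rmax_r B c). fold B' in H0. lra.
    - left; apply Rinv_0_lt_compat; lra. }
  assert (Havg : forall j, avg (nj j) f w <= c + K1 * avg (nj j) (gpot Td Pi) w + K2 / INR (nj j)).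
  { intros j. unfold avg. rewrite !birk_sumf. fold a. fold b.
    specialize (Hineq (nj j)).
    assert (Hn : 0 < INR (nj j)) by (apply lt_0_INR; auto).
    assert (Heq : c + K1 * (/ INR (nj j) * sumf b (nj j)) + K2 / INR (nj j)
        = / INR (nj j) * (INR (nj j) * c + (B' - c) / delta * (INR N * (sumf b (nj j) + INR N * Gb)))).
    { unfold K1, K2. field. split; lra. }
    rewrite Heq. apply Rmult_le_compat_l; [left; apply Rinv_0_lt_compat; lra| exact Hineq]. }
  destruct (Hf (eps / 2) ltac:(lra)) as [J1 HJ1].
  destruct (Hg (eps / 2 / (K1 + 1)) ltac:(apply Rdiv_lt_0_compat; lra)) as [J2 HJ2].
  destruct (INR_unbounded (K2 / (eps / 2))) as [J3 HJ3].
  set (j := (J1 + J2 + J3)%nat).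
  specialize (HJ1 j ltac:(unfold j; lia)). specialize (HJ2 j ltac:(unfold j; lia)).
  unfold R_dist in HJ1, HJ2. apply Rabs_def2 in HJ1. apply Rabs_def2 in HJ2.
  pose proof (Havg j) as Hj.
  assert (HnJ : INR J3 <= INR (nj j)).
  { apply le_INR. pose proof (nj_ge nj hinc j). unfold j in *. lia. }
  assert (Hn : 0 < INR (nj j)) by (apply lt_0_INR; auto).
  assert (T1 : K1 * avg (nj j) (gpot Td Pi) w <= eps / 2).
  { assert (avg (nj j) (gpot Td Pi) w < eps / 2 / (K1 + 1)) by lra.
    assert (K1 * avg (nj j) (gpot Td Pi) w <= (K1 + 1) * (eps / 2 / (K1 + 1))).
    { destruct (Rle_dec 0 (avg (nj j) (gpot Td Pi) w)).
      - apply Rmult_le_compat; lra.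
      - assert (eps / 2 / (K1 + 1) > 0) by (apply Rdiv_lt_0_compat; lra). nra. }
    replace ((K1 + 1) * (eps / 2 / (K1 + 1))) with (eps / 2) in H0 by (field; lra). lra. }
  assert (T2 : K2 / INR (nj j) < eps / 2).
  { apply (Rmult_lt_reg_r (INR (nj j))); auto. unfold Rdiv. rewrite Rmult_assoc, Rinv_l by lra.
    rewrite Rmult_1_r.
    assert (K2 < eps / 2 * INR J3).
    { apply (Rmult_lt_compat_r (eps / 2)) in HJ3; [|lra].
      unfold Rdiv in HJ3. rewrite Rmult_assoc, Rinv_l, Rmult_1_r in HJ3 by lra. lra. }
    assert (eps / 2 * INR J3 <= eps / 2 * INR (nj j)) by (apply Rmult_le_compat_l; lra).
    lra. }
  unfold c in Hj. lra.
Qed.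

Lemma birk_opp f w n : birk_sum (fun v => - f v) w n = - birk_sum f w n.
Proof. induction n; simpl; [lra|]. rewrite IHn; lra. Qed.

Lemma avg_opp f w n : avg n (fun v => - f v) w = - avg n f w.
Proof. unfold avg. rewrite birk_opp. ring. Qed.

Lemma cont_opp m f : cont_Sigma m f -> cont_Sigma m (fun v => - f v).
Proof.
  intros H w Hw eps He. destruct (H w Hw eps He) as [N HN]. exists N.
  intros w' Hw' Hk. replace (- f w' - - f w) with (- (f w' - f w)) by ring.
  rewrite Rabs_Ropp. auto.
Qed.

Theorem lemma6
  (m : nat) (T Td : nat -> R -> R) (Pi : (nat -> nat) -> R) (f : (nat -> nat) -> R)
  (hmaps : forall i, (i < m)%nat -> forall x, 0 <= x <= 1 -> 0 <= T i x <= 1)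
  (hderiv : forall i, (i < m)%nat -> deriv_on01 (T i) (Td i))
  (hC1 : forall i, (i < m)%nat -> cont_on01 (Td i))
  (hpos : forall i, (i < m)%nat -> forall x, 0 <= x <= 1 -> 0 < Td i x)
  (hdisj : forall i j, (i < m)%nat -> (j < m)%nat -> i <> j ->
     forall x y, 0 < x < 1 -> 0 < y < 1 -> T i x <> T j y)
  (hdiam : forall eps, 0 < eps -> exists N : nat, forall n, (N <= n)%nat ->
     forall w, in_Sigma m w -> forall x y, 0 <= x <= 1 -> 0 <= y <= 1 ->
       Rabs (ifs_comp T w n x - ifs_comp T w n y) <= eps)
  (hPi : forall w, in_Sigma m w -> Un_cv (fun n => ifs_comp T w n 0) (Pi w))
  (hfix : forall i, (i < m)%nat -> T i (Pi (constseq i)) = Pi (constseq i))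
  (hle1 : forall i, (i < m)%nat -> Td i (Pi (constseq i)) <= 1)
  (hlt1 : forall i, (i < m)%nat -> forall x, 0 <= x <= 1 -> x <> Pi (constseq i) ->
     0 < Td i x < 1)
  (hI : exists i, indI m Td Pi i)
  (hf : cont_Sigma m f) :
  (forall (nj : nat -> nat) (w : nat -> nat) (L : R),
     (forall j, (0 < nj j)%nat) -> (forall j, (nj j < nj (S j))%nat) ->
     in_Sigma m w ->
     Un_cv (fun j => avg (nj j) (gpot Td Pi) w) 0 ->
     Un_cv (fun j => avg (nj j) f w) L ->
     inA m Td Pi f L)
  /\
  (forall (w : nat -> nat) (L : R),
     in_Sigma m w ->
     Un_cv (fun n => avg n (gpot Td Pi) w) 0 ->
     Un_cv (fun n => avg n f w) L ->
     inA m Td Pi f L).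
Proof.
  assert (P1 : forall (nj : nat -> nat) (w : nat -> nat) (L : R),
     (forall j, (0 < nj j)%nat) -> (forall j, (nj j < nj (S j))%nat) ->
     in_Sigma m w ->
     Un_cv (fun j => avg (nj j) (gpot Td Pi) w) 0 ->
     Un_cv (fun j => avg (nj j) f w) L ->
     inA m Td Pi f L).
  { intros nj w L H0 H1 Hw Hg Hf. split.
    - destruct (main_upper m T Td Pi (fun v => - f v) hmaps hderiv hC1 hpos hdisj hPi hfix hle1 hlt1
        (cont_opp m f hf) nj w (- L) H0 H1 Hw Hg) as [i [Hi Hle]].
      + pose proof (CV_opp _ _ Hf) as Ho. intros eps He. destruct (Ho eps He) as [N HN].
        exists N. intros n Hn. rewrite avg_opp. apply HN; auto.
      + exists i. split; auto. lra.
    - apply (main_upper m T Td Pi f hmaps hderiv hC1 hpos hdisj hPi hfix hle1 hlt1 hf nj w L); auto. }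
  split; auto.
  intros w L Hw Hg Hf. apply (P1 S w L); auto.
  - intros; lia.
  - apply (Un_cv_S (fun n => avg n (gpot Td Pi) w)); auto.
  - apply (Un_cv_S (fun n => avg n f w)); auto.
Qed.
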